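(* Let $c\in C([0,1])$ with $c>0$ on $[0,1]$, and let $c^*=\max_{[0,1]}c$. For every $s>0$ and all $m_1,m_2\in C^1([0,1])$, $$\big|\lambda(s,m_1)-\lambda(s,m_2)\big|\le c^*\Big(e^{4s\|m_1-m_2\|_{C([0,1])}}-1\Big).$$
   Context: Fix an integer $d\ge1$. For $m\in C^1([0,1])$ and $s>0$, $\lambda(s,m)$ denotes the principal eigenvalue of $-\varphi''-\frac{d-1}{r}\varphi'-2s\,m'(r)\varphi'+c(r)\varphi=\lambda\varphi$ on $(0,1)$, $\varphi'(0)=\varphi'(1)=0$; equivalently $\lambda(s,m)=\min\{\int_0^1 r^{d-1}e^{2sm}(|\varphi'|^2+c\varphi^2)dr:\ \varphi\in H^1((0,1)),\ \int_0^1 r^{d-1}e^{2sm}\varphi^2dr=1\}$. $\|\cdot\|_{C([0,1])}$ is the sup norm. *)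

(* Defs.v *)
From HB Require Import structures.
From mathcomp Require Import all_boot all_order all_algebra.
From mathcomp Require Import all_classical all_reals all_analysis.
Set Implicit Arguments. Unset Strict Implicit. Unset Printing Implicit Defensive.
Import Order.TTheory GRing.Theory Num.Theory.
Import numFieldNormedType.Exports.
Local Open Scope classical_set_scope.
Local Open Scope ring_scope.

Section Defs.
Variable R : realType.
Local Notation mu := (@lebesgue_measure R).

Definition C1_01 (m : R -> R) : Prop :=
  {within `[(0%R:R), (1%R:R)], continuous m} /\
  exists dm : R -> R, {within `[(0%R:R), (1%R:R)], continuous dm} /\
    forall x : R, x \in `]0, 1[ -> is_derive x (1%R:R) m (dm x).

(* (phi, dphi) represents an element of H^1((0,1)): dphi is in L^2(0,1)
   (hence in L^1(0,1)) and phi is its primitive on [0,1]. *)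
Definition H1_01 (phi dphi : R -> R) : Prop :=
  measurable_fun `[(0%R:R), (1%R:R)] dphi /\
  mu.-integrable `[(0%R:R), (1%R:R)] (EFin \o dphi) /\
  (\int[mu]_(t in `[(0%R:R), (1%R:R)]) ((dphi t) ^+ 2)%:E < +oo)%E /\
  forall x : R, x \in `[(0%R:R), (1%R:R)] ->
    ((phi x)%:E = (phi 0%R)%:E + \int[mu]_(t in `[(0%R:R), x]) (dphi t)%:E)%E.

Definition weight (d : nat) (s : R) (m : R -> R) (r : R) : R :=
  r ^+ (d.-1) * expR (2 * s * m r).

Definition rayleigh (d : nat) (c : R -> R) (s : R) (m : R -> R)
    (phi dphi : R -> R) : \bar R :=
  (\int[mu]_(r in `[(0%R:R), (1%R:R)])
     (weight d s m r * ((dphi r) ^+ 2 + c r * (phi r) ^+ 2))%:E)%E.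

Definition wnorm2 (d : nat) (s : R) (m : R -> R) (phi : R -> R) : \bar R :=
  (\int[mu]_(r in `[(0%R:R), (1%R:R)]) (weight d s m r * (phi r) ^+ 2)%:E)%E.

(* principal eigenvalue, via the variational characterization
   (an infimum over H^1, which the paper notes is attained) *)
Definition lam (d : nat) (c : R -> R) (s : R) (m : R -> R) : \bar R :=
  ereal_inf [set rayleigh d c s m p.1 p.2
            | p in [set p : (R -> R) * (R -> R) |
                      H1_01 p.1 p.2 /\ wnorm2 d s m p.1 = 1%E]].

Definition supnorm01 (f : R -> R) : R := sup [set `|f x| | x in `[(0%R:R), (1%R:R)]].

Definition max01 (f : R -> R) : R := sup [set f x | x in `[(0%R:R), (1%R:R)]].
End Defs.

(* Main.v *)
Require Import Defs.
From HB Require Import structures.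
From mathcomp Require Import all_boot all_order all_algebra.
From mathcomp Require Import all_classical all_reals all_analysis.
From mathcomp Require Import ring lra.
Import Order.TTheory GRing.Theory Num.Theory.
Import numFieldNormedType.Exports.
Local Open Scope classical_set_scope.
Local Open Scope ring_scope.

Set Implicit Arguments. Unset Strict Implicit.
Section H.
Variable R : realType.
Local Notation mu := (@lebesgue_measure R).

Lemma le_int (D : set R) (f g : R -> \bar R) :
  (forall x, D x -> (0 <= f x)%E) -> (forall x, D x -> (f x <= g x)%E) ->
  (\int[mu]_(x in D) f x <= \int[mu]_(x in D) g x)%E.
Proof.
move=> f0 fg.
have g0 : forall x, D x -> (0 <= g x)%E := fun x Dx => le_trans (f0 x Dx) (fg x Dx).
rewrite (ge0_integralE mu f0) (ge0_integralE mu g0) /=.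
apply: ereal_sup_le => _ [h hf <-]; exists h => // x.
apply: le_trans (hf x) _; rewrite /patch; case: ifP => // /set_mem; exact: fg.
Qed.

Lemma int_scale_le (D : set R) (f : R -> \bar R) (k : R) : 0 < k ->
  (forall x, D x -> (0 <= f x)%E) ->
  (\int[mu]_(x in D) (k%:E * f x) <= k%:E * \int[mu]_(x in D) f x)%E.
Proof.
move=> k0 f0.
have kf0 : forall x, D x -> (0 <= k%:E * f x)%E.
  by move=> x Dx; apply: mule_ge0; [rewrite lee_fin ltW | exact: f0].
rewrite (ge0_integralE mu f0) (ge0_integralE mu kf0) /=.
apply: ge_ereal_sup => _ [h hf <-].
have ki0 : 0 <= k^-1 by rewrite invr_ge0 ltW.
pose h' := scale_nnsfun h ki0.
have -> : sintegral mu (HBNNSimple.NonNegSimpleFun.sort h) = (k%:E * sintegral mu (HBNNSimple.NonNegSimpleFun.sort h'))%E.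
  rewrite -sintegralrM; congr sintegral; apply/funext => x /=.
  by rewrite mulrA divff ?mul1r // gt_eqF.
rewrite lee_pmul2l ?lte_fin //.
apply: ereal_sup_ubound; exists h' => // x /=.
move: (hf x); rewrite /patch; case: ifP => _ hx.
  rewrite -(@lee_pmul2l _ k%:E) ?lte_fin // -EFinM mulrA divff ?gt_eqF // mul1r //.
have p0 : (point : \bar R) = 0%E by [].
move: hx; rewrite p0 !lee_fin => hx.
by rewrite mulr_ge0_le0 // invr_ge0 ltW.
Qed.


Lemma int_scale (D : set R) (f : R -> \bar R) (k : R) : 0 < k ->
  (forall x, D x -> (0 <= f x)%E) ->
  (\int[mu]_(x in D) (k%:E * f x) = k%:E * \int[mu]_(x in D) f x)%E.
Proof.
move=> k0 f0; apply/eqP; rewrite eq_le int_scale_le //=.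
have ki0 : 0 < k^-1 by rewrite invr_gt0.
have kf0 : forall x, D x -> (0 <= k%:E * f x)%E.
  by move=> x Dx; apply: mule_ge0; [rewrite lee_fin ltW | exact: f0].
have := int_scale_le ki0 kf0.
under eq_integral do rewrite muleA -EFinM mulVf ?gt_eqF // mul1e.
move=> H; rewrite -(@lee_pmul2l _ k^-1%:E) ?lte_fin // muleA -EFinM mulVf ?gt_eqF // mul1e //.
Qed.

Lemma I01P (x : R) : [set` `[(0%R:R), (1%R:R)]] x -> 0 <= x /\ x <= 1.
Proof. by rewrite /= in_itv /= => /andP. Qed.

Lemma weight_ge0 d s m x : [set` `[(0%R:R), (1%R:R)]] x -> 0 <= weight d s m x.
Proof.
move=> /I01P [x0 _]; rewrite /weight mulr_ge0 // ?exprn_ge0 // expR_ge0.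
Qed.

Lemma weight_le d s m1 m2 (dl : R) x : 0 <= s -> [set` `[(0%R:R), (1%R:R)]] x ->
  `|m1 x - m2 x| <= dl -> weight d s m1 x <= expR (2 * s * dl) * weight d s m2 x.
Proof.
move=> s0 /I01P [x0 _] hx; rewrite /weight mulrCA ler_wpM2l ?exprn_ge0 //.
rewrite -expRD ler_expR.
have := le_trans (ler_norm _) hx => h; nra.
Qed.


Lemma lam_ge0 d c s m : (forall x, [set` `[(0%R:R), (1%R:R)]] x -> 0 <= c x) ->
  (0 <= lam d c s m)%E.
Proof.
move=> c0; rewrite /lam; apply: le_ereal_inf_tmp => _ [p _ <-].
apply: integral_ge0 => x Ix; rewrite lee_fin mulr_ge0 ?weight_ge0 //.
by rewrite addr_ge0 ?sqr_ge0 // mulr_ge0 ?sqr_ge0 // c0.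
Qed.

Lemma W_pos d s m : 0 <= s -> {within `[(0%R:R), (1%R:R)], continuous m} ->
  exists w : R, 0 < w /\
    (\int[mu]_(r in `[(0%R:R), (1%R:R)]) (weight d s m r)%:E = w%:E)%E.
Proof.
move=> s0 hm.
have [cmin _ hmin] := EVT_min ler01 hm.
have [cmax _ hmax] := EVT_max ler01 hm.
set Wi := (\int[mu]_(r in _) _)%E.
have Wub : (Wi <= (expR (2 * s * m cmax))%:E)%E.
  apply: (@le_trans _ _ (\int[mu]_(r in `[(0%R:R), (1%R:R)]) (cst (expR (2 * s * m cmax))%:E r))%E).
    apply: le_int => x Ix; first by rewrite lee_fin weight_ge0.
    have [x0 x1] := I01P Ix.
    rewrite lee_fin /= /weight -[X in _ <= X]mul1r ler_pM ?exprn_ge0 ?expR_ge0 //.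
      by rewrite exprn_ile1.
    rewrite ler_expR ler_wpM2l ?mulr_ge0 //; apply: hmax.
    by rewrite in_itv /= x0 x1.
  rewrite integral_cst; last exact: measurable_itv.
  have mu01 : (mu [set` `[(0%R:R),(1%R:R)]] = 1)%E.
    by rewrite lebesgue_measure_itv /= lte_fin ltr01 /= oppr0 adde0.
  by move: mu01 => /= ->; rewrite mule1.
pose A : set R := [set` `[(2^-1 : R), (1%R:R)]].
pose e := ((2^-1 : R) ^+ (d.-1) * expR (2 * s * m cmin)).
have e0 : 0 < e by rewrite /e mulr_gt0 ?exprn_gt0 ?expR_gt0 // invr_gt0.
have hA : (\int[mu]_(r in `[(0%R:R), (1%R:R)]) (e%:E * (\1_A r)%:E) = (e * 2^-1)%:E)%E.
  rewrite int_scale //.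
  rewrite integral_indic //; try exact: measurable_itv.
  rewrite setIidl; last first.
    move=> x; rewrite /A /= !in_itv /= => /andP[h1 ->]; rewrite andbT.
    by apply: le_trans h1; rewrite invr_ge0.
  have muA : (mu A = (2^-1 : R)%:E)%E.
    rewrite /A lebesgue_measure_itv /= lte_fin invf_lt1 ?ltr1n //= -EFinD.
    congr EFin; lra.
  by move: muA => /= ->; rewrite -EFinM.
have Wlb : ((e * 2^-1)%:E <= Wi)%E.
  rewrite -hA; apply: le_int => x Ix.
    by rewrite lee_fin mulr_ge0 ?indicE ?ler0n // ltW.
  have [x0 x1] := I01P Ix.
  rewrite indicE; case: (boolP (x \in A)) => xA; last first.
    by rewrite -EFinM /= mulr0n mulr0 lee_fin weight_ge0.
  rewrite -EFinM /= mulr1n mulr1 lee_fin /e /weight ler_pM ?exprn_ge0 ?expR_ge0 ?invr_ge0 //.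
    move: xA; rewrite /A inE /= in_itv /= => /andP[h1 _].
    by rewrite lerXn2r // ?nnegrE ?invr_ge0 // (le_trans _ h1) // invr_ge0.
  rewrite ler_expR ler_wpM2l ?mulr_ge0 //; apply: hmin.
  by rewrite in_itv /= x0 x1.
have Wfin : Wi \is a fin_num.
  rewrite ge0_fin_numE; first by apply: le_lt_trans Wub _; exact: ltry.
  by apply: le_trans Wlb; rewrite lee_fin ltW // mulr_gt0 // invr_gt0.
exists (fine Wi); split; last by rewrite fineK.
rewrite -lte_fin fineK //; apply: lt_le_trans Wlb.
by rewrite lte_fin mulr_gt0 // invr_gt0.
Qed.


Lemma lam_ub d c s m C : 0 <= s -> {within `[(0%R:R), (1%R:R)], continuous m} ->
  0 < C -> (forall x, [set` `[(0%R:R), (1%R:R)]] x -> 0 <= c x <= C) ->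
  (lam d c s m <= C%:E)%E.
Proof.
move=> s0 hm C0 hc.
have [w [w0 hW]] := W_pos d s0 hm.
pose a := (Num.sqrt w)^-1.
have a2 : a ^+ 2 = w^-1 by rewrite /a exprVn sqr_sqrtr // ltW.
have a20 : 0 < a ^+ 2 by rewrite a2 invr_gt0.
apply: (@le_trans _ _ (rayleigh d c s m (cst a) (cst 0))).
  apply: ereal_inf_lbound; exists (cst a, cst 0) => //; split.
    rewrite /H1_01 /=; split; first exact: measurable_cst.
    split; first exact: integrable0.
    split; first by rewrite integral0_eq ?ltry // => t _; rewrite expr0n.
    by move=> x _; rewrite integral0_eq ?adde0.
  rewrite /wnorm2.
  transitivity (\int[mu]_(r in `[(0%R:R), (1%R:R)]) ((a ^+ 2)%:E * (weight d s m r)%:E))%E.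
    by apply: eq_integral => x _; rewrite -EFinM mulrC.
  by rewrite int_scale // ?hW -?EFinM ?a2 ?mulVf ?gt_eqF // => x Ix; rewrite lee_fin weight_ge0.
rewrite /rayleigh.
apply: (@le_trans _ _ (\int[mu]_(r in `[(0%R:R), (1%R:R)]) ((C * a ^+ 2)%:E * (weight d s m r)%:E))%E).
  apply: le_int => x Ix; have := weight_ge0 d s m Ix; have /andP[cx0 cxC] := hc x Ix => w0x.
    by rewrite lee_fin /= expr0n /= add0r mulr_ge0 // mulr_ge0 // ltW.
  by rewrite -EFinM lee_fin /= expr0n /= add0r [C * _ * _]mulrC ler_wpM2l // ler_wpM2r // ltW.
rewrite (int_scale (mulr_gt0 C0 a20)); last by move=> x Ix; rewrite lee_fin weight_ge0.
by rewrite hW -EFinM a2 -mulrA mulVf ?gt_eqF // mulr1.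
Qed.


Lemma wn_le d s m1 m2 (dl : R) phi : 0 < s ->
  (forall x, [set` `[(0%R:R), (1%R:R)]] x -> `|m1 x - m2 x| <= dl) ->
  (wnorm2 d s m1 phi <= (expR (2 * s * dl))%:E * wnorm2 d s m2 phi)%E.
Proof.
move=> s0 hd; rewrite /wnorm2 -int_scale ?expR_gt0 //; last first.
  by move=> x Ix; rewrite lee_fin mulr_ge0 ?weight_ge0 ?sqr_ge0.
apply: le_int => x Ix.
  by rewrite lee_fin mulr_ge0 ?weight_ge0 ?sqr_ge0.
by rewrite -EFinM lee_fin [X in _ <= X]mulrA ler_wpM2r ?sqr_ge0 // (weight_le _ (ltW s0) Ix (hd x Ix)).
Qed.

Lemma ray_le d c s m1 m2 (dl : R) phi dphi : 0 < s ->
  (forall x, [set` `[(0%R:R), (1%R:R)]] x -> 0 <= c x) ->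
  (forall x, [set` `[(0%R:R), (1%R:R)]] x -> `|m1 x - m2 x| <= dl) ->
  (rayleigh d c s m1 phi dphi <= (expR (2 * s * dl))%:E * rayleigh d c s m2 phi dphi)%E.
Proof.
move=> s0 c0 hd; rewrite /rayleigh -int_scale ?expR_gt0 //; last first.
  by move=> x Ix; rewrite lee_fin mulr_ge0 ?weight_ge0 // addr_ge0 ?sqr_ge0 // mulr_ge0 ?sqr_ge0 ?c0.
apply: le_int => x Ix.
  by rewrite lee_fin mulr_ge0 ?weight_ge0 // addr_ge0 ?sqr_ge0 // mulr_ge0 ?sqr_ge0 ?c0.
rewrite -EFinM lee_fin [X in _ <= X]mulrA ler_wpM2r ?(weight_le _ (ltW s0) Ix (hd x Ix)) //.
by rewrite addr_ge0 ?sqr_ge0 // mulr_ge0 ?sqr_ge0 ?c0.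
Qed.


Lemma lam_cmp d c s m1 m2 (dl : R) : 0 < s ->
  (forall x, [set` `[(0%R:R), (1%R:R)]] x -> 0 <= c x) ->
  (forall x, [set` `[(0%R:R), (1%R:R)]] x -> `|m1 x - m2 x| <= dl) ->
  (lam d c s m1 <= (expR (4 * s * dl))%:E * lam d c s m2)%E.
Proof.
move=> s0 c0 hd.
set E2 := expR (2 * s * dl).
have E20 : 0 < E2 by apply: expR_gt0.
have hE : expR (4 * s * dl) = E2 * E2 by rewrite -expRD; congr expR; lra.
have hd' : forall x, [set` `[(0%R:R), (1%R:R)]] x -> `|m2 x - m1 x| <= dl.
  by move=> x Ix; rewrite distrC hd.
have key : forall p : (R -> R) * (R -> R), H1_01 p.1 p.2 -> wnorm2 d s m2 p.1 = 1%E ->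
    (lam d c s m1 <= (E2 * E2)%:E * rayleigh d c s m2 p.1 p.2)%E.
  case=> phi dphi /= hH hN.
  have Kub : (wnorm2 d s m1 phi <= E2%:E)%E.
    by have := wn_le d phi s0 hd; rewrite hN mule1.
  have Klb : ((E2^-1)%:E <= wnorm2 d s m1 phi)%E.
    have := wn_le d phi s0 hd'; rewrite hN -/E2 => h.
    rewrite -(@lee_pmul2l _ E2%:E) ?lte_fin // -EFinM mulfV ?gt_eqF //.
  have K0 : (0 <= wnorm2 d s m1 phi)%E.
    by apply: integral_ge0 => x Ix; rewrite lee_fin mulr_ge0 ?weight_ge0 ?sqr_ge0.
  have Kfin : wnorm2 d s m1 phi \is a fin_num.
    by rewrite ge0_fin_numE // (le_lt_trans Kub) ?ltry.
  set k := fine (wnorm2 d s m1 phi).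
  have hK : wnorm2 d s m1 phi = k%:E by rewrite fineK.
  have k0 : 0 < k.
    by rewrite -lte_fin -hK (lt_le_trans _ Klb) // lte_fin invr_gt0.
  pose a := (Num.sqrt k)^-1.
  have a2 : a ^+ 2 = k^-1 by rewrite /a exprVn sqr_sqrtr // ltW.
  have a20 : 0 < a ^+ 2 by rewrite a2 invr_gt0.
  pose psi := fun x => a * phi x.
  pose dpsi := fun x => a * dphi x.
  have Hpsi : H1_01 psi dpsi.
    case: hH => [hm [hi [hs hp]]].
    split; first exact: (measurable_realfun.measurable_funM (measurable_cst a) hm).
    split.
      have hi2 : mu.-integrable [set` `[(0%R:R), (1%R:R)]] (fun x => (a%:E * (EFin \o dphi) x)%E).
        by apply: integrableZl.
      apply: (eq_integrable _ _ _ _ hi2) => //.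
    split.
      have -> : (\int[mu]_(t in `[(0%R:R), (1%R:R)]) ((dpsi t) ^+ 2)%:E = \int[mu]_(t in `[(0%R:R), (1%R:R)]) ((a ^+ 2)%:E * ((dphi t) ^+ 2)%:E))%E.
        by apply: eq_integral => x _; rewrite -EFinM /dpsi exprMn.
      rewrite (int_scale a20); last by move=> x _; rewrite lee_fin sqr_ge0.
      have J0 : (0 <= \int[mu]_(t in `[(0%R:R), (1%R:R)]) ((dphi t) ^+ 2)%:E)%E.
        by apply: integral_ge0 => x _; rewrite lee_fin sqr_ge0.
      have Jfin := hs; rewrite -ge0_fin_numE // in Jfin.
      by rewrite -(fineK Jfin) -EFinM ltry.
    move=> x Ix; have [x0 x1] := I01P Ix.
    have sub : [set` `[(0%R:R), x]] `<=` [set` `[(0%R:R), (1%R:R)]].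
      move=> t; rewrite /= !in_itv /= => /andP[t0 tx].
      by rewrite t0 (le_trans tx x1).
    have intx : mu.-integrable [set` `[(0%R:R), x]] (EFin \o dphi).
      by apply: (integrableS _ _ _ hi).
    transitivity ((a * phi x)%:E)%E; first by [].
    have -> : (\int[mu]_(t in `[(0%R:R), x]) (dpsi t)%:E = a%:E * \int[mu]_(t in `[(0%R:R), x]) (dphi t)%:E)%E.
      rewrite -(integralZl _ intx); last exact: measurable_itv.
      by apply: eq_integral => t _; rewrite /= EFinM.
    move: (hp x Ix).
    case: (\int[mu]_(t in `[(0%R:R), x]) (dphi t)%:E)%E => [r| |] //= h.
    case: h => h.
    by rewrite /psi -EFinM -EFinD h; congr EFin; ring.
  have Npsi : wnorm2 d s m1 psi = 1%E.
    rewrite /wnorm2.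
    transitivity (\int[mu]_(r in `[(0%R:R), (1%R:R)]) ((a ^+ 2)%:E * (weight d s m1 r * phi r ^+ 2)%:E))%E.
      by apply: eq_integral => x _; rewrite -EFinM /psi exprMn; congr EFin; ring.
    rewrite (int_scale a20); last by move=> x Ix; rewrite lee_fin mulr_ge0 ?weight_ge0 ?sqr_ge0.
    by move: hK; rewrite /wnorm2 => ->; rewrite -EFinM a2 mulVf ?gt_eqF.
  have Rpsi : rayleigh d c s m1 psi dpsi = ((a ^+ 2)%:E * rayleigh d c s m1 phi dphi)%E.
    rewrite /rayleigh -(int_scale a20); last first.
      by move=> x Ix; rewrite lee_fin mulr_ge0 ?weight_ge0 // addr_ge0 ?sqr_ge0 // mulr_ge0 ?sqr_ge0 ?c0.
    by apply: eq_integral => x _; rewrite -EFinM /psi /dpsi !exprMn; congr EFin; ring.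
  apply: (@le_trans _ _ (rayleigh d c s m1 psi dpsi)).
    by apply: ereal_inf_lbound; exists (psi, dpsi).
  rewrite Rpsi.
  apply: (@le_trans _ _ ((a ^+ 2)%:E * (E2%:E * rayleigh d c s m2 phi dphi))%E).
    by apply: lee_wpmul2l; [rewrite lee_fin ltW | exact: ray_le].
  rewrite muleA -EFinM; apply: lee_wpmul2r.
    by apply: integral_ge0 => x Ix; rewrite lee_fin mulr_ge0 ?weight_ge0 // addr_ge0 ?sqr_ge0 // mulr_ge0 ?sqr_ge0 ?c0.
  rewrite lee_fin; apply: ler_wpM2r; first exact: ltW.
  rewrite a2 invf_ple ?posrE //; move: Klb; rewrite hK lee_fin //.
have E0 : 0 < E2 * E2 by rewrite mulr_gt0.
have h : ((E2 * E2)^-1%:E * lam d c s m1 <= lam d c s m2)%E.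
  apply: le_ereal_inf_tmp => _ [p [hp1 hp2] <-].
  have := key p hp1 hp2.
  move=> hk; rewrite -(@lee_pmul2l _ (E2 * E2)%:E) ?lte_fin // muleA -EFinM mulfV ?gt_eqF // mul1e.
  exact: hk.
rewrite hE.
apply: (@le_trans _ _ ((E2 * E2)%:E * ((E2 * E2)^-1%:E * lam d c s m1))%E).
  by rewrite muleA -EFinM mulfV ?gt_eqF // mul1e.
by apply: lee_wpmul2l => //; rewrite lee_fin ltW.
Qed.

End H.

Unset Implicit Arguments.

Lemma nb (R : realType) (u v y : R) : v <= y -> y <= u -> `|y| <= `|u| + `|v|.
Proof.
move=> vy yu; rewrite ler_norml.
have := ler_norm u; have := ler_norm (- v); rewrite normrN => h1 h2.
have := normr_ge0 u; have := normr_ge0 v => h3 h4.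
apply/andP; split; lra.
Qed.

Theorem lemma4p1 (R : realType) (d : nat) (c : R -> R) :
  (1 <= d)%N ->
  {within `[0, 1], continuous c} ->
  (forall x : R, x \in `[0, 1] -> 0 < c x) ->
  forall (s : R) (m1 m2 : R -> R),
    0 < s -> C1_01 m1 -> C1_01 m2 ->
    (`| lam d c s m1 - lam d c s m2 |
       <= (max01 c * (expR (4 * s * supnorm01 (m1 \- m2)) - 1))%:E)%E.
Proof.
move=> _ hc cpos s m1 m2 s0 [hm1 _] [hm2 _].
have [a1 _ ha1] := EVT_max ler01 hm1.
have [b1 _ hb1] := EVT_min ler01 hm1.
have [a2 _ ha2] := EVT_max ler01 hm2.
have [b2 _ hb2] := EVT_min ler01 hm2.
have I0 : (0:R) \in `[(0:R), 1] by rewrite in_itv /= lexx ler01.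
pose S := [set `|(m1 \- m2) x| | x in [set` `[(0%R:R), (1%R:R)]]].
have hS : has_sup S.
  split; first by exists `|(m1 \- m2) 0|; exists 0.
  exists ((`|m1 a1| + `|m1 b1|) + (`|m2 a2| + `|m2 b2|)) => _ [x Ix <-] /=.
  apply: le_trans (ler_normB _ _) _.
  by apply: lerD; apply: nb; [exact: hb1|exact: ha1|exact: hb2|exact: ha2].
have hd : forall x, [set` `[(0%R:R), (1%R:R)]] x -> `|m1 x - m2 x| <= supnorm01 (m1 \- m2).
  by move=> x Ix; apply: sup_upper_bound => //; exists x.
have hd' : forall x, [set` `[(0%R:R), (1%R:R)]] x -> `|m2 x - m1 x| <= supnorm01 (m1 \- m2).
  by move=> x Ix; rewrite distrC; exact: hd.
have dl0 : 0 <= supnorm01 (m1 \- m2) by apply: le_trans (hd 0 I0); exact: normr_ge0.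
have [cm _ hcm] := EVT_max ler01 hc.
have hC : has_sup [set c x | x in [set` `[(0%R:R), (1%R:R)]]].
  split; first by exists (c 0), 0.
  by exists (c cm) => _ [x Ix <-]; exact: hcm.
have cC : forall x, [set` `[(0%R:R), (1%R:R)]] x -> 0 <= c x <= max01 c.
  move=> x Ix; rewrite ltW ?cpos //=.
  by apply: sup_upper_bound => //; exists x.
have C0 : 0 < max01 c.
  by apply: lt_le_trans (cpos 0 I0) _; have /andP[] := cC 0 I0.
have c0 : forall x, [set` `[(0%R:R), (1%R:R)]] x -> 0 <= c x.
  by move=> x Ix; have /andP[] := cC x Ix.
have l10 := lam_ge0 d s m1 c0.
have l20 := lam_ge0 d s m2 c0.
have l1C := lam_ub d (ltW s0) hm1 C0 cC.
have l2C := lam_ub d (ltW s0) hm2 C0 cC.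
have h12 := lam_cmp d s0 c0 hd.
have h21 := lam_cmp d s0 c0 hd'.
have f1 : lam d c s m1 \is a fin_num.
  by rewrite (ge0_fin_numE l10); exact: (le_lt_trans l1C (ltry _)).
have f2 : lam d c s m2 \is a fin_num.
  by rewrite (ge0_fin_numE l20); exact: (le_lt_trans l2C (ltry _)).
have [x1 e1] : exists x1, lam d c s m1 = x1%:E.
  exists (fine (lam d c s m1)); exact: (esym (fineK f1)).
have [x2 e2] : exists x2, lam d c s m2 = x2%:E.
  exists (fine (lam d c s m2)); exact: (esym (fineK f2)).
move: l10 l20 l1C l2C h12 h21; rewrite e1 e2.
set E := expR _.
have E1 : 1 <= E.
  rewrite /E -[X in X <= _]expR0 ler_expR; apply: mulr_ge0; last exact: dl0.
  by apply: mulr_ge0; [lra | exact: ltW].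
move=> h1 h2 h3 h4 h5 h6.
move: h1 h2 h3 h4 h5 h6; rewrite -!EFinM !lee_fin => h1 h2 h3 h4 h5 h6.
change (`|(x1 - x2)%:E| <= (max01 c * (E - 1))%:E)%E.
rewrite /= lee_fin ler_norml; apply/andP; split; nra.
Qed.
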